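(* Let $U=(E,\mathcal{D},\rho)$ be a U-matroid, $E=[n]$, with generous matroid extension $\hat U$. Then $\mathcal{B}(\hat U) = \mathrm{conv}(\mathcal{B}(U)\cap\{0,1\}^n) = \mathcal{B}(U)\cap[0,1]^n$, and $\mathcal{I}(\hat U) = \mathrm{conv}(\mathcal{A}(U)\cap\{0,1\}^n) = \mathcal{A}(U)\cap[0,1]^n$.
   Context: A U-matroid is a triple $(E,\mathcal{D},\rho)$ with $E$ finite, $\mathcal{D}\subseteq2^E$ an accessible distributive lattice of sets, and $\rho:\mathcal{D}\to\mathbb{N}$ with $\rho(\emptyset)=0$, monotone, submodular, with unit increase. Its submodular polyhedron is $\mathcal{A}(U)=\{\mathbf{x}\in\mathbb{R}^n:\mathbf{x}(A)\le\rho(A)\ \forall A\in\mathcal{D}\}$ and its base polyhedron is $\mathcal{B}(U)=\{\mathbf{x}\in\mathcal{A}(U):\mathbf{x}(E)=\rho(E)\}$, where $\mathbf{x}(A)=\sum_{a\in A}x_a$. For a matroid $M$, $\mathcal{I}(M)$ is its independence polytope, the convex hull of characteristic vectors of independent sets. The generous matroid extension $\hat U=(E,2^E,\hat\rho)$ is the matroid obtained by iterating the generous atom extension: for $a$ with $\{a\}\notin\mathcal{D}$, on $\mathcal{D}[a]=\mathcal{D}\cup\{S\cup a:S\in\mathcal{D}\}$ set $\rho_a(S)=\rho(S)$ if $S\in\mathcal{D}$, $\rho_a(S)=\rho(S-a)$ if $S\notin\mathcal{D}$ and $\rho(S-a)=\rho(\sup_\mathcal{D}(S))$, and $\rho_a(S)=\rho(S-a)+1$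 otherwise ($\sup_\mathcal{D}(S)$ = smallest element of $\mathcal{D}$ containing $S$), repeating until the lattice is $2^E$; $\hat\rho$ is independent of the order and dominates every matroid extension of $\rho$. *)

(* Defs.v *)
From HB Require Import structures.
From mathcomp Require Import all_boot all_order all_algebra.
From mathcomp Require Import reals.
Set Implicit Arguments. Unset Strict Implicit. Unset Printing Implicit Defensive.
Import Order.TTheory GRing.Theory Num.Theory.

Section UMatroid.
Variable n : nat.
Local Notation E := 'I_n.

(* (E, D, rho) is a U-matroid. rho is given on all subsets, but only its
   values on members of D are constrained/used. *)
Definition is_Umatroid (D : {set {set E}}) (rho : {set E} -> nat) : Prop :=
  [/\ set0 \in D, [set: E] \in D &
      (forall A B, A \in D -> B \in D -> (A :|: B \in D) /\ (A :&: B \in D))] /\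
  [/\
      (forall A, A \in D -> A != set0 -> exists2 a, a \in A & A :\ a \in D),
      rho set0 = 0%N,
      (forall A B, A \in D -> B \in D -> A \subset B -> (rho A <= rho B)%N),
      (forall A B, A \in D -> B \in D ->
         (rho (A :|: B) + rho (A :&: B) <= rho A + rho B)%N) &
      (forall A a, A \in D -> A :|: [set a] \in D ->
         (rho (A :|: [set a]) <= (rho A).+1)%N)].

Definition sup_in (D : {set {set E}}) (S : {set E}) : {set E} :=
  \bigcap_(T in D | S \subset T) T.

Definition atom_ext_lat (D : {set {set E}}) (a : E) : {set {set E}} :=
  D :|: [set S :|: [set a] | S in D].

Definition atom_ext_rank (D : {set {set E}}) (rho : {set E} -> nat) (a : E)
    (S : {set E}) : nat :=
  if S \in D then rho S
  else if rho (S :\ a) == rho (sup_in D S) then rho (S :\ a)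
  else (rho (S :\ a)).+1.

Definition gen_step (p : {set {set E}} * ({set E} -> nat)) (a : E)
    : {set {set E}} * ({set E} -> nat) :=
  let: (D, rho) := p in
  if [set a] \in D then p else (atom_ext_lat D a, atom_ext_rank D rho a).

(* rank function of the generous matroid extension: iterate the generous atom
   extension over the atoms a with {a} not in the current lattice, in the
   order 0, 1, ..., n-1 (the result is order independent). *)
Definition gen_ext_rank (D : {set {set E}}) (rho : {set E} -> nat)
    : {set E} -> nat :=
  (foldl gen_step (D, rho) (enum E)).2.

Variable R : realType.
Local Open Scope ring_scope.

Definition xsum (x : 'rV[R]_n) (A : {set E}) : R := \sum_(a in A) x ord0 a.

Definition in_subm_poly (D : {set {set E}}) (rho : {set E} -> nat)
    (x : 'rV[R]_n) : Prop :=
  forall A, A \in D -> xsum x A <= (rho A)%:R.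

Definition in_base_poly (D : {set {set E}}) (rho : {set E} -> nat)
    (x : 'rV[R]_n) : Prop :=
  in_subm_poly D rho x /\ xsum x [set: E] = (rho [set: E])%:R.

Definition chi (X : {set E}) : 'rV[R]_n := \row_(a < n) (a \in X)%:R.

Definition is01 (x : 'rV[R]_n) : Prop := exists X : {set E}, x = chi X.

Definition in_cube (x : 'rV[R]_n) : Prop :=
  forall a : E, 0 <= x ord0 a <= 1.

Definition conv (P : 'rV[R]_n -> Prop) (x : 'rV[R]_n) : Prop :=
  exists (m : nat) (p : 'I_m -> 'rV[R]_n) (l : 'I_m -> R),
    [/\ forall i, P (p i), forall i, 0 <= l i, \sum_(i < m) l i = 1 &
        x = \sum_(i < m) l i *: p i].

Definition in_indep_poly (r : {set E} -> nat) (x : 'rV[R]_n) : Prop :=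
  conv (fun y => exists2 I : {set E}, y = chi I & r I = #|I|) x.

End UMatroid.

(* Main.v *)
Require Import Defs.
From HB Require Import structures.
From mathcomp Require Import all_boot all_order all_algebra.
From mathcomp Require Import reals.
From mathcomp Require Import ring lra zify.
Import Order.TTheory GRing.Theory Num.Theory.
Set Implicit Arguments. Unset Strict Implicit. Unset Printing Implicit Defensive.
Section Comb.
Variable n : nat.
Local Notation E := 'I_n.
Implicit Types (D : {set {set E}}) (rho : {set E} -> nat) (S A B T X : {set E}).

Definition Pprop D rho := forall S A, S \in D -> A \in D -> rho S <= rho A + #|S :\: A|.
Definition Inv D rho := [/\ set0 \in D, setT \in D,
  (forall A B, A \in D -> B \in D -> (A :|: B \in D) /\ (A :&: B \in D)),
  rho set0 = 0 & Pprop D rho].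
Definition Qprop D rho X := forall A, A \in D -> #|X :&: A| <= rho A.

Lemma cardD1A S A a : a \in S -> #|S :\: A| = #|(S :\ a) :\: A| + (a \notin A).
Proof.
move=> aS; case: (boolP (a \in A)) => ha /=.
  rewrite addn0; have -> : (S :\ a) :\: A = S :\: A.
    by apply/setP => x; rewrite !inE; case: eqP => [->|]; rewrite ?ha ?andbF.
  by [].
have -> : S :\: A = a |: ((S :\ a) :\: A).
  apply/setP => x; rewrite !inE; case: eqP => [->|] /=; by rewrite ?aS ?ha.
by rewrite cardsU1 !inE eqxx /= andbF addnC.
Qed.

Lemma cardD_sub S A B : A \subset B -> #|S :\: B| <= #|S :\: A|.
Proof. move=> h; apply: subset_leq_card; exact: setDS. Qed.

Lemma cardD_sub1 S A a : #|S :\: (A :\ a)| <= #|S :\: A| + 1.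
Proof.
apply: leq_trans (_ : #|a |: (S :\: A)| <= _); last by rewrite cardsU1 addnC leq_add2l leq_b1.
apply: subset_leq_card; apply/subsetP => x; rewrite !inE.
by case: eqP.
Qed.

Lemma sup_mem D S : setT \in D -> (forall A B, A \in D -> B \in D -> A :&: B \in D) ->
  sup_in D S \in D.
Proof.
move=> hT hI; rewrite /sup_in; apply: (big_ind (fun X => X \in D)) => //.
by move=> i /andP[].
Qed.

Lemma sup_sub D S : S \subset sup_in D S.
Proof. by apply/bigcapsP => T /andP[]. Qed.

Lemma sup_min D S B : B \in D -> S \subset B -> sup_in D S \subset B.
Proof. move=> hB hSB; apply: (bigcap_inf B); by rewrite hB hSB. Qed.

Lemma initP D rho : is_Umatroid D rho -> Pprop D rho.
Proof.
case=> [[h0 hT hUI] [hacc hr0 hmono _ hunit]] S A hS hA.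
suff h : rho (S :|: A) <= rho A + #|S :\: A|.
  apply: leq_trans h; apply: hmono => //; [by case: (hUI _ _ hS hA) | exact: subsetUl].
move: {2}#|S| (leqnn #|S|) => k; elim: k S hS => [|k IH] S hS hk.
  have -> : S = set0 by apply/eqP; rewrite -cards_eq0 -leqn0.
  by rewrite set0U set0D cards0 addn0.
case: (eqVneq S set0) => [->|hne]; first by rewrite set0U set0D cards0 addn0.
have [a aS hSa] := hacc S hS hne.
have hk' : #|S :\ a| <= k by move: hk; rewrite (cardsD1 a S) aS.
have IH' := IH _ hSa hk'.
have eSA : S :|: A = ((S :\ a) :|: A) :|: [set a].
  apply/setP => x; rewrite !inE; case: eqP => [->|] /=; by rewrite ?aS ?orbT ?orbF.
rewrite (cardD1A A aS).
case: (boolP (a \in A)) => ha /=.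
  rewrite addn0; suff -> : S :|: A = (S :\ a) :|: A by [].
  by rewrite eSA; apply/setP => x; rewrite !inE; case: eqP => [->|] /=; rewrite ?ha ?orbT ?orbF.
rewrite eSA; apply: leq_trans (hunit _ _ _ _) _.
- by case: (hUI _ _ hSa hA).
- by rewrite -eSA; case: (hUI _ _ hS hA).
by rewrite addnA addn1 ltnS.
Qed.


Lemma Pmono D rho S A : Pprop D rho -> S \in D -> A \in D -> S \subset A -> rho S <= rho A.
Proof.
move=> hP hS hA hSA; have := hP _ _ hS hA.
have -> : S :\: A = set0 by apply/eqP; rewrite setD_eq0.
by rewrite cards0 addn0.
Qed.

Section Step.
Variables (D : {set {set E}}) (rho : {set E} -> nat) (a : E).
Hypothesis hInv : Inv D rho.
Local Notation D' := (atom_ext_lat D a).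
Local Notation rho' := (atom_ext_rank D rho a).

Lemma memD'P X : reflect (X \in D \/ exists2 T, T \in D & X = T :|: [set a]) (X \in D').
Proof.
rewrite /atom_ext_lat inE; apply: (iffP orP) => [[h|/imsetP[T hT ->]]|[h|[T hT ->]]].
- by left.
- by right; exists T.
- by left.
- by right; apply/imsetP; exists T.
Qed.

Lemma subD' X : X \in D -> X \in D'.
Proof. by move=> h; apply/memD'P; left. Qed.

Lemma notD_form X : X \in D' -> X \notin D -> a \in X /\ X :\ a \in D.
Proof.
case/memD'P => [->//|[T hT eX]] hX; subst X.
split; first by rewrite !inE eqxx orbT.
case: (boolP (a \in T)) => aT.
  have : T :|: [set a] = T by apply/setP => x; rewrite !inE; case: eqP => [->|]; rewrite ?aT ?orbF ?orbT.
  by move=> e; move: hX; rewrite e hT.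
have -> : (T :|: [set a]) :\ a = T; last by [].
by apply/setP => x; rewrite !inE; case: eqP => [->|] /=; rewrite ?(negbTE aT) ?andbT ?orbF.
Qed.

Lemma rho'_D X : X \in D -> rho' X = rho X.
Proof. by move=> h; rewrite /atom_ext_rank h. Qed.

Lemma rho'_notD X : X \in D' -> X \notin D ->
  (rho' X = rho (X :\ a) /\ rho (X :\ a) = rho (sup_in D X)) \/
  (rho' X = (rho (X :\ a)).+1 /\ rho (X :\ a) < rho (sup_in D X)).
Proof.
move=> hX hnX; case: hInv => h0 hT hUI _ hP.
have [aX hXa] := notD_form hX hnX.
have hsup : sup_in D X \in D by apply: sup_mem => // A B hA hB; case: (hUI _ _ hA hB).
rewrite /atom_ext_rank (negbTE hnX); case: eqP => e; [by left | right; split => //].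
rewrite ltn_neqAle; apply/andP; split; first by apply/eqP.
apply: Pmono hP hXa hsup _; apply: subset_trans (sup_sub D X); exact: subD1set.
Qed.

Lemma LW X : X \in D' ->
  (rho' X = (rho (X :\ a)).+1 /\ X :\ a \in D /\ a \in X /\ X \notin D) \/
  (exists B, [/\ B \in D, X \subset B & rho' X = rho B]).
Proof.
move=> hX; case: hInv => h0 hT hUI _ hP.
case: (boolP (X \in D)) => hD.
  by right; exists X; rewrite rho'_D.
have [aX hXa] := notD_form hX hD.
case: (rho'_notD hX hD) => [[e1 e2]|[e1 e2]].
- right; exists (sup_in D X); split => //.
  + by apply: sup_mem => // A B hA hB; case: (hUI _ _ hA hB).
  + exact: sup_sub.
  + by rewrite e1 e2.
- by left.
Qed.

Lemma stepP : Pprop D' rho'.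
Proof.
case: hInv => h0 hT hUI _ hP.
have step1 : forall S A, S \in D -> A \in D' -> rho' S <= rho' A + #|S :\: A|.
  move=> S A hS hA; rewrite rho'_D //.
  case: (LW hA) => [[e [hAa [aA _]]]|[B [hB hAB e]]]; rewrite e.
  - apply: leq_trans (hP _ _ hS hAa) _.
    by rewrite addSn -addnS leq_add2l -addn1; exact: cardD_sub1.
  - apply: leq_trans (hP _ _ hS hB) _; rewrite leq_add2l; exact: cardD_sub.
move=> S A hS hA.
case: (boolP (S \in D)) => hSD; first exact: step1.
have [aS hSa] := notD_form hS hSD.
have hTS : #|(S :\ a) :\: A| <= #|S :\: A| by apply: subset_leq_card; apply: setSD; exact: subD1set.
case: (rho'_notD hS hSD) => [[e1 e2]|[e1 e2]].
  rewrite e1 -(rho'_D hSa); apply: leq_trans (step1 _ _ hSa hA) _; by rewrite leq_add2l.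
rewrite e1.
case: (LW hA) => [[e [hAa [aA hAD]]]|[B [hB hAB e]]]; rewrite e.
- rewrite addSn ltnS; apply: leq_trans (hP _ _ hSa hAa) _.
  rewrite leq_add2l; apply: subset_leq_card; apply/subsetP => x; rewrite !inE.
  by case: eqP => //= _ /andP[/negbTE -> ->].
- case: (boolP (a \in B)) => aB.
    have hTB : (S :\ a) :|: B \in D by case: (hUI _ _ hSa hB).
    have hsup : sup_in D S \in D by apply: sup_mem => // X Y hX hY; case: (hUI _ _ hX hY).
    have hsTB : sup_in D S \subset (S :\ a) :|: B.
      apply: sup_min => //; apply/subsetP => x xS; rewrite !inE.
      by case: eqP => [->|] //=; rewrite ?aB ?orbT ?xS.
    apply: leq_trans e2 _; apply: leq_trans (Pmono hP hsup hTB hsTB) _.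
    apply: leq_trans (hP _ _ hTB hB) _; rewrite leq_add2l; apply: subset_leq_card.
    apply/subsetP => x; rewrite !inE => /andP[xB]; rewrite (negbTE xB) orbF => /andP[_ xS].
    rewrite xS andbT; apply: contra xB; exact: (subsetP hAB).
  have aA : a \notin A by apply: contra aB; exact: (subsetP hAB).
  apply: leq_ltn_trans (hP _ _ hSa hB) _; rewrite ltn_add2l.
  have aSA : a \in S :\: A by rewrite inE aA aS.
  rewrite (cardsD1 a (S :\: A)) aSA add1n ltnS; apply: subset_leq_card.
  apply/subsetP => x; rewrite !inE => /andP[xB /andP[xa xS]]; rewrite xa xS !andbT.
  by apply: contra xB; exact: (subsetP hAB).
Qed.


Lemma stepInv : Inv D' rho'.
Proof.
case: hInv => h0 hT hUI h00 hP; split.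
- exact: subD' h0.
- exact: subD' hT.
- move=> A B /memD'P hA /memD'P hB.
  case: hA => [hA|[T hT' ->]]; case: hB => [hB|[T' hT'' ->]].
  + by case: (hUI _ _ hA hB) => h1 h2; split; apply: subD'.
  + have [h1 h2] := hUI _ _ hA hT''.
    split; apply/memD'P.
      by right; exists (A :|: T') => //; rewrite setUA.
    case: (boolP (a \in A)) => aA.
      right; exists (A :&: T') => //; rewrite setIUr.
      by congr (_ :|: _); apply/setP => x; rewrite !inE; case: eqP => [->|]; rewrite ?aA ?andbF ?andbT.
    left; suff -> : A :&: (T' :|: [set a]) = A :&: T' by [].
    rewrite setIUr; apply/setP => x; rewrite !inE; case: eqP => [->|_]; rewrite ?(negbTE aA) /= ?andbF ?andbT ?orbF ?orbT ?andbF ?orbF //.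
  + have [h1 h2] := hUI _ _ hT' hB.
    split; apply/memD'P.
      by right; exists (T :|: B) => //; apply/setP => x; rewrite !inE; case: (x \in T); case: (x \in B); rewrite /= ?orbT ?orbF.
    case: (boolP (a \in B)) => aB.
      right; exists (T :&: B) => //; rewrite setIUl.
      by congr (_ :|: _); apply/setP => x; rewrite !inE; case: eqP => [->|]; rewrite ?aB ?andbF ?andbT.
    left; suff -> : (T :|: [set a]) :&: B = T :&: B by [].
    rewrite setIUl; apply/setP => x; rewrite !inE; case: eqP => [->|_]; rewrite ?(negbTE aB) /= ?andbF ?andbT ?orbF ?orbT ?andbF ?orbF //.
  + have [h1 h2] := hUI _ _ hT' hT''.
    split; apply/memD'P; right.
      exists (T :|: T') => //; apply/setP => x; rewrite !inE; by case: eqP; rewrite ?orbT ?orbF.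
    exists (T :&: T') => //; apply/setP => x; rewrite !inE; case: eqP; by rewrite ?orbT ?orbF.
- by rewrite rho'_D.
- exact: stepP.
Qed.

Lemma stepQ X : Qprop D' rho' X <-> Qprop D rho X.
Proof.
split => hQ A hA.
  by rewrite -(rho'_D hA); apply: hQ; exact: subD'.
case: (LW hA) => [[e [hAa [aA _]]]|[B [hB hAB e]]]; rewrite e.
- apply: leq_trans (_ : #|a |: (X :&: (A :\ a))| <= _).
    apply: subset_leq_card; apply/subsetP => x; rewrite !inE; by case: eqP.
  by rewrite cardsU1 addnC -addn1 leq_add ?leq_b1 ?hQ.
- apply: leq_trans (hQ _ hB); apply: subset_leq_card; exact: setIS.
Qed.

End Step.

Lemma fold_inv (s : seq E) : forall D rho, Inv D rho ->
  let q := foldl (@gen_step n) (D, rho) s in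
  [/\ Inv q.1 q.2, (forall S, S \in D -> S \in q.1), (forall S, S \in D -> q.2 S = rho S),
      (forall X, Qprop q.1 q.2 X <-> Qprop D rho X) & (forall a, a \in s -> [set a] \in q.1)].
Proof.
elim: s => [|a s IH] D rho hI /=; first by split.
case h: ([set a] \in D).
  have [i1 i2 i3 i4 i5] := IH _ _ hI; split => //.
  by move=> b; rewrite inE => /orP[/eqP ->|]; [exact: i2 | exact: i5].
have hI' := stepInv a hI.
have [i1 i2 i3 i4 i5] := IH _ _ hI'; split => //.
- by move=> S hS; apply: i2; exact: subD'.
- by move=> S hS; rewrite i3 ?rho'_D //; exact: subD'.
- by move=> X; rewrite i4 stepQ.
- move=> b; rewrite inE => /orP[/eqP ->|]; last exact: i5.
  apply: i2; apply/memD'P; right; exists set0; [by case: hI | by rewrite set0U].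
Qed.

End Comb.

Section Final.
Variable n : nat.
Local Notation E := 'I_n.
Variables (D : {set {set E}}) (rho : {set E} -> nat).
Hypothesis hU : is_Umatroid D rho.
Local Notation r := (gen_ext_rank D rho).

Lemma InvU : Inv D rho.
Proof.
have hP := initP hU; case: hU => [[h0 hT hUI] [_ hr0 _ _ _]]; by split.
Qed.

Lemma gen_all : forall X : {set E}, X \in (foldl (@gen_step n) (D, rho) (enum E)).1.
Proof.
have [i1 i2 i3 i4 i5] := fold_inv (enum E) InvU.
case: i1 => h0 _ hUI _ _ X.
have -> : X = \bigcup_(a in X) [set a].
  apply/setP => x; apply/idP/bigcupP => [xX|[y yX]]; first by exists x; rewrite ?inE.
  by rewrite inE => /eqP ->.
apply: (big_ind (fun Y => Y \in _)) => //.
  by move=> A B hA hB; case: (hUI _ _ hA hB).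
by move=> a _; apply: i5; rewrite mem_enum.
Qed.

Lemma r_D S : S \in D -> r S = rho S.
Proof. have [i1 i2 i3 i4 i5] := fold_inv (enum E) InvU; exact: i3. Qed.

Lemma r_P S A : r S <= r A + #|S :\: A|.
Proof.
have [[_ _ _ _ hP] i2 i3 i4 i5] := fold_inv (enum E) InvU.
apply: hP; exact: gen_all.
Qed.

Lemma r_0 : r set0 = 0.
Proof. have [[_ _ _ h _] i2 i3 i4 i5] := fold_inv (enum E) InvU; exact: h. Qed.

Lemma r_Q X : (forall A, #|X :&: A| <= r A) <-> Qprop D rho X.
Proof.
have [_ i2 i3 i4 i5] := fold_inv (enum E) InvU.
rewrite -i4; split => h A; last by apply: h; exact: gen_all.
by move=> _; exact: h.
Qed.

Lemma r_indep X : r X = #|X| <-> Qprop D rho X.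
Proof.
rewrite -r_Q; split.
  by move=> e A; have := r_P X A; rewrite e -{1}(cardsID A X) leq_add2r.
move=> h; apply/eqP; rewrite eqn_leq; apply/andP; split.
  by have := r_P X set0; rewrite r_0 setD0.
by have := h X; rewrite setIid.
Qed.

Lemma r_le1 a : r [set a] <= 1.
Proof. by have := r_P [set a] set0; rewrite r_0 setD0 cards1. Qed.

Lemma r_mono (S A : {set E}) : S \subset A -> r S <= r A.
Proof.
move=> h; have := r_P S A.
have -> : S :\: A = set0 by apply/eqP; rewrite setD_eq0.
by rewrite cards0 addn0.
Qed.

End Final.

Section Conv.
Variables (R : realType) (n : nat).
Local Open Scope ring_scope.
Implicit Types (P Q : 'rV[R]_n -> Prop).

Lemma conv_pt P x : P x -> conv P x.
Proof.
move=> hx; exists 1%N, (fun _ => x), (fun _ => 1); split.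
- by move=> _.
- by move=> _; exact: ler01.
- by rewrite big_ord1.
- by rewrite big_ord1 scale1r.
Qed.

Lemma conv_mono P Q x : (forall y, P y -> Q y) -> conv P x -> conv Q x.
Proof.
move=> hPQ [m [p [l [h1 h2 h3 h4]]]]; exists m, p, l; split => // i; exact: hPQ.
Qed.

Lemma conv_comb P y z (t : R) : conv P y -> conv P z -> 0 <= t <= 1 ->
  conv P (t *: y + (1 - t) *: z).
Proof.
move=> [m1 [p1 [l1 [h11 h12 h13 h14]]]] [m2 [p2 [l2 [h21 h22 h23 h24]]]] /andP[t0 t1].
exists (m1 + m2)%N.
exists (fun k => match split k with inl i => p1 i | inr i => p2 i end).
exists (fun k => match split k with inl i => t * l1 i | inr i => (1 - t) * l2 i end).
have eL i : split (lshift m2 i) = inl i := unsplitK (inl _ i).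
have eR i : split (rshift m1 i) = inr i := unsplitK (inr _ i).
split.
- by move=> k; case: (split k).
- move=> k; case: (split k) => i; apply: mulr_ge0 => //; by rewrite subr_ge0.
- rewrite big_split_ord /=.
  under eq_bigr do rewrite eL.
  under [X in _ + X]eq_bigr do rewrite eR.
  by rewrite -!mulr_sumr h13 h23 !mulr1 addrC subrK.
- rewrite big_split_ord /=.
  under eq_bigr do rewrite eL.
  under [X in _ = _ + X]eq_bigr do rewrite eR.
  rewrite h14 h24 !scaler_sumr; congr (_ + _); apply: eq_bigr => i _; by rewrite scalerA.
Qed.

End Conv.

Section Integrality.
Variables (R : realType) (n : nat) (J : finType) (L : J -> 'rV[R]_n -> R) (b : J -> R).
Local Open Scope ring_scope.
Hypothesis Llin : forall j (y z : 'rV[R]_n) (t : R), L j (y + t *: z) = L j y + t * L j z.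

Definition inP y := forall j, L j y <= b j.
Definition tight y := [set j | L j y == b j].

Lemma L0 j : L j 0 = 0.
Proof. have := Llin j 0 0 1; rewrite scaler0 addr0 mul1r => h; lra. Qed.


Lemma LN j d : L j (- d) = - L j d.
Proof. by have := Llin j 0 d (-1); rewrite add0r L0 add0r scaleN1r mulN1r. Qed.

Lemma step y d : inP y -> (forall j, j \in tight y -> L j d = 0) -> (exists j, 0 < L j d) ->
  exists t, [/\ 0 < t, inP (y + t *: d) & tight y \proper tight (y + t *: d)].
Proof.
move=> hy h0 [j1 hj1].
pose K := [pred j | 0 < L j d].
pose c j := (b j - L j y) / L j d.
have nt : forall j, K j -> 0 < b j - L j y.
  move=> j; rewrite inE => hj; rewrite subr_gt0 lt_neqAle hy andbT.
  apply/negP => /eqP e; have : j \in tight y by rewrite inE e.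
  by move/h0 => e'; move: hj; rewrite e' ltxx.
have Kj1 : K j1 by [].
case: (arg_minP c Kj1) => j0 hj0 hmin.
have cpos : 0 < c j0 by apply: divr_gt0 => //; apply: nt.
exists (c j0); split => //.
- move=> j; rewrite Llin.
  case: (ltP 0 (L j d)) => hj.
    have := hmin j hj; rewrite /c ler_pdivlMr // => h.
    by rewrite -lerBrDl.
  have : c j0 * L j d <= 0 by apply: mulr_ge0_le0 => //; exact: ltW.
  have := hy j; lra.
- apply/properP; split.
    apply/subsetP => j; rewrite !inE => hj; rewrite Llin h0 ?mulr0 ?addr0 //.
    by rewrite inE.
  exists j0.
    rewrite inE Llin /c; have hd : L j0 d != 0 by rewrite gt_eqF.
    by rewrite divfK // addrC subrK.
  rewrite inE; apply/negP => /eqP e; have := nt _ hj0; rewrite e subrr ltxx.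
  by [].
Qed.

Lemma decomp x d : inP x -> (forall j, j \in tight x -> L j d = 0) ->
  (exists j, 0 < L j d) -> (exists j, L j d < 0) ->
  exists y z (t : R), [/\ inP y, inP z, tight x \proper tight y & tight x \proper tight z] /\
     (0 <= t <= 1 /\ x = t *: y + (1 - t) *: z).
Proof.
move=> hx h0 hp [j2 hj2].
have [t1 [t1p hy1 pr1]] := step hx h0 hp.
have h0' : forall j, j \in tight x -> L j (- d) = 0 by move=> j hj; rewrite LN h0 ?oppr0.
have hp' : exists j, 0 < L j (- d) by exists j2; rewrite LN oppr_gt0.
have [t2 [t2p hy2 pr2]] := step hx h0' hp'.
exists (x + t1 *: d), (x + t2 *: - d), (t2 / (t1 + t2)); split => //; split.
  apply/andP; split; first by apply: divr_ge0; apply: ltW => //; exact: addr_gt0.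
  by rewrite ler_pdivrMr ?mul1r ?lerDr ?ltW ?addr_gt0.
have hs : t1 + t2 != 0 by rewrite gt_eqF ?addr_gt0.
by apply/rowP => k; rewrite !mxE; field.
Qed.

Lemma conv_ind (G : pred 'rV[R]_n) :
  (forall x, inP x -> ~~ G x -> exists d, [/\ forall j, j \in tight x -> L j d = 0,
       (exists j, 0 < L j d) & (exists j, L j d < 0)]) ->
  forall x, inP x -> conv (fun y => [/\ inP y, G y & tight x \subset tight y]) x.
Proof.
move=> H.
suff : forall k x, (#|J| - #|tight x| <= k)%N -> inP x ->
  conv (fun y => [/\ inP y, G y & tight x \subset tight y]) x.
  by move=> h x; apply: (h _ x (leqnn _)).
elim=> [|k IH] x hk hx; case: (boolP (G x)) => hG.
- by apply: conv_pt; split.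
- have [d [h1 h2 h3]] := H x hx hG.
  have [y [z [t [[hy hz py pz] [ht e]]]]] := decomp hx h1 h2 h3.
  have := proper_card py; have : (#|tight y| <= #|J|)%N by exact: max_card. lia.
- by apply: conv_pt; split.
have [d [h1 h2 h3]] := H x hx hG.
have [y [z [t [[hy hz py pz] [ht e]]]]] := decomp hx h1 h2 h3.
rewrite [X in conv _ X]e.
have sub : forall w : {set J}, tight x \proper w -> forall v, [/\ inP v, G v & w \subset tight v] ->
    [/\ inP v, G v & tight x \subset tight v].
  move=> w pw v [a1 a2 a3]; split => //; apply: subset_trans a3; exact: proper_sub.
apply: conv_comb => //.
  apply: (conv_mono (sub _ py)); apply: IH => //.
  have := proper_card py; have : (#|tight y| <= #|J|)%N by exact: max_card. lia.
apply: (conv_mono (sub _ pz)); apply: IH => //.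
have := proper_card pz; have : (#|tight z| <= #|J|)%N by exact: max_card. lia.
Qed.

Lemma inP_conv (Pt : 'rV[R]_n -> Prop) x : (forall y, Pt y -> inP y) -> conv Pt x -> inP x.
Proof.
move=> hP [m [p [l [h1 h2 h3 ->]]]] j.
have -> : L j (\sum_(i < m) l i *: p i) = \sum_(i < m) l i * L j (p i).
  elim/big_rec2: _ => [|i s1 s2 _ IH]; first exact: L0.
  by rewrite -IH addrC Llin addrC.
apply: le_trans (_ : \sum_(i < m) l i * b j <= _).
  by apply: ler_sum => i _; apply: ler_wpM2l => //; exact: hP.
by rewrite -mulr_suml h3 mul1r.
Qed.

End Integrality.

Section Xsum.
Variables (R : realType) (n : nat).
Local Open Scope ring_scope.
Local Notation E := 'I_n.
Implicit Types (x y z : 'rV[R]_n) (A B X : {set E}).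

Lemma xsumE x A : xsum x A = \sum_a (a \in A)%:R * x ord0 a.
Proof.
rewrite /xsum big_mkcond /=; apply: eq_bigr => a _.
by case: (a \in A); rewrite ?mul1r ?mul0r.
Qed.

Lemma xsum_lin x y (t : R) A : xsum (x + t *: y) A = xsum x A + t * xsum y A.
Proof. by rewrite /xsum mulr_sumr -big_split; apply: eq_bigr => a _; rewrite !mxE. Qed.

Lemma xsumB x y A : xsum (x - y) A = xsum x A - xsum y A.
Proof. by rewrite /xsum -sumrB; apply: eq_bigr => a _; rewrite !mxE. Qed.

Lemma xsum0 A : xsum (0 : 'rV[R]_n) A = 0.
Proof. by rewrite /xsum big1 // => a _; rewrite mxE. Qed.

Lemma xsum1 x a : xsum x [set a] = x ord0 a.
Proof. by rewrite /xsum big_set1. Qed.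

Lemma xsum_conv m (l : 'I_m -> R) (p : 'I_m -> 'rV[R]_n) A :
  xsum (\sum_(i < m) l i *: p i) A = \sum_(i < m) l i * xsum (p i) A.
Proof.
elim/big_rec2: _ => [|i s1 s2 _ IH]; first exact: xsum0.
by rewrite -IH addrC xsum_lin addrC.
Qed.

Lemma xsum_chi X A : xsum (chi R X) A = #|X :&: A|%:R.
Proof.
rewrite /xsum.
have -> : \sum_(a in A) chi R X ord0 a = \sum_(a in A) (if a \in X then 1 else 0).
  by apply: eq_bigr => a _; rewrite mxE; case: (a \in X).
rewrite -big_mkcondr /= sumr_const.
congr (_ *+ _); apply: eq_card => a; by rewrite !inE andbC.
Qed.

Lemma xsum_mod x A B : xsum x (A :|: B) + xsum x (A :&: B) = xsum x A + xsum x B.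
Proof.
rewrite !xsumE -!big_split; apply: eq_bigr => a _ /=; rewrite !inE.
by case: (a \in A); case: (a \in B); rewrite /= ?mul0r ?mul1r ?addr0 ?add0r.
Qed.

Lemma xsumT x a : xsum x [set: E] = x ord0 a + xsum x ([set: E] :\ a).
Proof.
rewrite /xsum (bigD1 a) ?inE //=; congr (_ + _); apply: eq_bigl => i; by rewrite !inE andbT.
Qed.

Lemma conv_xsum_le (Pt : 'rV[R]_n -> Prop) x A c :
  (forall y, Pt y -> xsum y A <= c) -> conv Pt x -> xsum x A <= c.
Proof.
move=> h [m [p [l [h1 h2 h3 ->]]]]; rewrite xsum_conv.
apply: le_trans (_ : \sum_(i < m) l i * c <= _).
  by apply: ler_sum => i _; apply: ler_wpM2l => //; exact: h.
by rewrite -mulr_suml h3 mul1r.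
Qed.

Lemma conv_xsum_ge (Pt : 'rV[R]_n -> Prop) x A c :
  (forall y, Pt y -> c <= xsum y A) -> conv Pt x -> c <= xsum x A.
Proof.
move=> h [m [p [l [h1 h2 h3 ->]]]]; rewrite xsum_conv.
apply: le_trans (_ : \sum_(i < m) l i * c <= _).
  by rewrite -mulr_suml h3 mul1r.
by apply: ler_sum => i _; apply: ler_wpM2l => //; exact: h.
Qed.

Lemma conv_xsum_eq (Pt : 'rV[R]_n -> Prop) x A c :
  (forall y, Pt y -> xsum y A = c) -> conv Pt x -> xsum x A = c.
Proof.
move=> h hc; apply/eqP; rewrite eq_le.
by rewrite (conv_xsum_le _ hc) ?(conv_xsum_ge _ hc) // => y /h ->.
Qed.

End Xsum.

Section Concrete.
Variables (R : realType) (n : nat).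
Local Open Scope ring_scope.
Local Notation E := 'I_n.
Variables (D : {set {set E}}) (rho : {set E} -> nat).
Hypothesis hU : is_Umatroid D rho.

Definition Jc := ({set E} + (E + E))%type.
Definition Lc (j : Jc) (y : 'rV[R]_n) : R :=
  match j with
  | inl A => if A \in D then xsum y A else 0
  | inr (inl a) => y ord0 a
  | inr (inr a) => - y ord0 a
  end.
Definition bc (j : Jc) : R :=
  match j with
  | inl A => if A \in D then (rho A)%:R else 0
  | inr (inl _) => 1
  | inr (inr _) => 0
  end.

Lemma Lc_lin j y z t : Lc j (y + t *: z) = Lc j y + t * Lc j z.
Proof.
case: j => [A|[a|a]] /=.
- by case: (A \in D); rewrite ?xsum_lin ?mulr0 ?addr0.
- by rewrite !mxE.
- by rewrite !mxE opprD mulrN.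
Qed.

Definition G01 (y : 'rV[R]_n) : bool := [forall a, (y ord0 a == 0) || (y ord0 a == 1)].

Lemma inPcE y : inP Lc bc y <-> in_subm_poly D rho y /\ in_cube y.
Proof.
split.
  move=> h; split.
    by move=> A hA; have := h (inl A); rewrite /= hA.
  by move=> a; have := h (inr (inl a)); have := h (inr (inr a)) => /=; rewrite oppr_le0 => -> ->.
case=> h1 h2 [A|[a|a]] /=.
- by case: (boolP (A \in D)) => hA //; exact: h1.
- by case/andP: (h2 a).
- by rewrite oppr_le0; case/andP: (h2 a).
Qed.

Lemma G01E y : G01 y -> y = chi R [set a | y ord0 a == 1].
Proof.
move=> /forallP h; apply/rowP => a; rewrite !mxE inE ord1.
by case/orP: (h a) => /eqP ->; rewrite ?eqxx // eq_sym oner_eq0.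
Qed.

Lemma chi_G01 (X : {set E}) : G01 (chi R X).
Proof. by apply/forallP => a; rewrite mxE; case: (a \in X); rewrite eqxx ?orbT. Qed.

Lemma chi_cube (X : {set E}) : in_cube (chi R X).
Proof. by move=> a; rewrite mxE; case: (a \in X); rewrite ?lexx ?ler01. Qed.

Lemma xsum_chi1 (i : E) (A : {set E}) : xsum (chi R [set i]) A = (i \in A)%:R.
Proof.
rewrite xsum_chi; case: (boolP (i \in A)) => h.
  suff -> : [set i] :&: A = [set i] by rewrite cards1.
  by apply/setP => x; rewrite !inE; case: eqP => // ->.
suff -> : [set i] :&: A = set0 by rewrite cards0.
by apply/setP => x; rewrite !inE; case: eqP => // ->; rewrite (negbTE h).
Qed.

Lemma chi1E (i a : E) : chi R [set i] ord0 a = (a == i)%:R.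
Proof. by rewrite mxE inE. Qed.

Section Dir.
Variable x : 'rV[R]_n.
Hypothesis hx : inP Lc bc x.
Let TD := [set A in D | xsum x A == (rho A)%:R].

Lemma TD_I (A B : {set E}) : A \in TD -> B \in TD -> A :&: B \in TD.
Proof.
case: hU => [[h0 hT hUI] [_ _ _ hsub _]].
have [hs hc] := inPcE x; have [hsm _] := hs hx.
rewrite !inE => /andP[hA /eqP eA] /andP[hB /eqP eB].
have [hAB hIAB] := hUI _ _ hA hB; rewrite hIAB /=.
have m := xsum_mod x A B.
have s1 := hsm _ hAB; have s2 := hsm _ hIAB.
have s3 : ((rho (A :|: B))%:R + (rho (A :&: B))%:R <= (rho A)%:R + (rho B)%:R :> R).
  by rewrite -!natrD ler_nat; exact: hsub.
apply/eqP; lra.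
Qed.


Let F := [set a | (0 < x ord0 a) && (x ord0 a < 1)].

Lemma dir_key (d : 'rV[R]_n) : (forall A, A \in TD -> xsum d A = 0) -> (forall a, a \notin F -> d ord0 a = 0) ->
  (exists a, 0 < d ord0 a) ->
  exists d : 'rV[R]_n, [/\ forall j, j \in tight Lc bc x -> Lc j d = 0, (exists j, 0 < Lc j d) & (exists j, Lc j d < 0)].
Proof.
move=> h1 h2 [a ha]; exists d; split.
- move=> [A|[b|b]]; rewrite inE /=.
  + case: (boolP (A \in D)) => hA // e; apply: h1; by rewrite inE hA e.
  + move=> /eqP e; apply: h2; by rewrite inE e ltxx andbF.
  + move=> /eqP e; have hb : x ord0 b = 0 by lra.
    by rewrite h2 ?oppr0 // inE hb ltxx.
- by exists (inr (inl a)).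
- by exists (inr (inr a)) => /=; rewrite oppr_lt0.
Qed.

Let Tf (i : E) := \bigcap_(A | (A \in TD) && (i \in A)) A.

Lemma Tf_min i A : A \in TD -> i \in A -> Tf i \subset A.
Proof. by move=> hA iA; apply: (bigcap_inf A); rewrite hA iA. Qed.

Lemma Tf_in i : i \in Tf i.
Proof. by apply/bigcapP => A /andP[]. Qed.

Lemma Tf_TD i A : A \in TD -> i \in A -> Tf i \in TD.
Proof.
move=> hA iA.
have : (Tf i \in TD) \/ Tf i = setT.
  apply: (big_ind (fun X => (X \in TD) \/ X = setT)); first by right.
  - move=> X Y [hX|->] [hY|->]; rewrite ?setIT ?setTI; [left; exact: TD_I|by left|by left|by right].
  - by move=> B /andP[hB _]; left.
case=> // e; have hTA := Tf_min hA iA; rewrite e in hTA *.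
have eA : A = setT by apply/eqP; rewrite eqEsubset subsetT.
by rewrite -eA.
Qed.

Lemma dir : ~~ G01 x -> exists d : 'rV[R]_n, [/\ forall j, j \in tight Lc bc x -> Lc j d = 0,
  (exists j, 0 < Lc j d) & (exists j, Lc j d < 0)].
Proof.
have [hsm hcube] := (inPcE x).1 hx.
move=> hG.
have [i0 hi0F] : exists i0, i0 \in F.
  move: hG; rewrite /G01 negb_forall => /existsP[a]; rewrite negb_or => /andP[a0 a1].
  exists a; rewrite inE; have /andP[c0 c1] := hcube a.
  by rewrite !lt_neqAle c0 c1 eq_sym a0 a1.
case: (boolP [exists i, (i \in F) && [forall A, (A \in TD) ==> (i \notin A)]]).
  case/existsP => i /andP[iF /forallP hi].
  apply: (@dir_key (chi R [set i])).
  - move=> A hA; rewrite xsum_chi1; have := hi A; rewrite hA /= => /negbTE -> //.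
  - by move=> a haF; rewrite chi1E; case: eqP => // e; move: haF; rewrite e iF.
  - by exists i; rewrite chi1E eqxx ltr01.
rewrite negb_exists => /forallP hall.
have hT : forall i, i \in F -> exists2 A, A \in TD & i \in A.
  move=> i iF; have := hall i; rewrite iF /= negb_forall => /existsP[A].
  by rewrite negb_imply negbK => /andP[hA iA]; exists A.
case: (arg_minnP (fun i => #|Tf i|) hi0F) => i iF hmin.
have [A0 hA0 iA0] := hT i iF.
have TTD := Tf_TD hA0 iA0.
case: (boolP [exists k, [&& k \in Tf i, k \in F & k != i]]).
  case/existsP => k /and3P[kT kF ki].
  apply: (@dir_key (chi R [set i] - chi R [set k])).
  - move=> A hA; rewrite xsumB !xsum_chi1.
    suff -> : (i \in A) = (k \in A) by rewrite subrr.
    apply/idP/idP => h.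
      by apply: (subsetP (Tf_min hA h)).
    have [Ak hAk kAk] := hT k kF.
    have s1 : Tf k \subset Tf i := Tf_min TTD kT.
    have e : Tf k = Tf i by apply/eqP; rewrite eqEcard s1 hmin.
    by apply: (subsetP (Tf_min hA h)); rewrite e Tf_in.
  - move=> a haF; rewrite !mxE !inE.
    have -> : (a == i) = false by apply/negbTE; apply: contra haF => /eqP ->.
    have -> : (a == k) = false by apply/negbTE; apply: contra haF => /eqP ->.
    by rewrite subrr.
  - by exists i; rewrite !mxE !inE eqxx eq_sym (negbTE ki) subr0 ltr01.
rewrite negb_exists => /forallP hno.
exfalso.
move: TTD; rewrite inE => /andP[_ /eqP eT].
move: eT; rewrite /xsum (bigD1 i) ?Tf_in //=.
have -> : \sum_(k in Tf i | k != i) x ord0 k = (\sum_(k in Tf i | k != i) (nat_of_bool (x ord0 k == 1%R)))%:R.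
  rewrite natr_sum; apply: eq_bigr => k /andP[kT ki].
  have := hno k; rewrite kT ki andbT /= => kF.
  have /andP[c0 c1] := hcube k.
  move: kF; rewrite inE negb_and -!leNgt.
  case: (x ord0 k =P 1) => [-> //|h1] /orP[h|h]; first by have -> : x ord0 k = 0 by apply/eqP; rewrite eq_le h c0.
  by exfalso; apply: h1; apply/eqP; rewrite eq_le h c1.
have iF' : i \in F := iF.
move: iF'; rewrite inE => /andP[xi0 xi1].
set c := (\sum_(_ in _ | _) _)%N => e.
have h1 : (c%:R < (rho (Tf i))%:R :> R) by rewrite -e; lra.
have h2 : ((rho (Tf i))%:R < c.+1%:R :> R) by rewrite -natr1 -e; lra.
rewrite !ltr_nat in h1 h2; lia.
Qed.

End Dir.


Lemma integral_thm (x : 'rV[R]_n) : in_subm_poly D rho x -> in_cube x ->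
  conv (fun y => [/\ inP Lc bc y, G01 y & tight Lc bc x \subset tight Lc bc y]) x.
Proof.
move=> h1 h2; apply: (conv_ind Lc_lin); last by apply/inPcE.
by move=> y hy hG; exact: dir hy hG.
Qed.

Lemma claim4 (x : 'rV[R]_n) : conv (fun y => in_subm_poly D rho y /\ is01 y) x <-> in_subm_poly D rho x /\ in_cube x.
Proof.
split.
  move=> hc; apply/inPcE; apply: (inP_conv Lc_lin _ hc).
  by move=> y [hy [X e]]; subst y; apply/inPcE; split => //; exact: chi_cube.
case=> h1 h2; apply: conv_mono (integral_thm h1 h2) => y [hy hG _].
split; first by case: (inPcE y).1.
by exists [set a | y ord0 a == 1]; exact: G01E.
Qed.

Lemma claim2 (x : 'rV[R]_n) : conv (fun y => in_base_poly D rho y /\ is01 y) x <-> in_base_poly D rho x /\ in_cube x.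
Proof.
split.
  move=> hc; have : in_subm_poly D rho x /\ in_cube x.
    apply/inPcE; apply: (inP_conv Lc_lin _ hc).
    by move=> y [[hy _] [X e]]; subst y; apply/inPcE; split => //; exact: chi_cube.
  case=> h1 h2; split => //; split => //.
  by apply: (conv_xsum_eq _ hc) => y [[_ e] _].
case=> [[h1 e] h2]; apply: conv_mono (integral_thm h1 h2) => y [hy hG hsub].
have hT : [set: E] \in D by case: hU => [[]].
have : inl [set: E] \in tight Lc bc y.
  by apply: (subsetP hsub); rewrite inE /= hT e.
rewrite inE /= hT => /eqP ey.
split; first by split => //; case: (inPcE y).1.
by exists [set a | y ord0 a == 1]; exact: G01E.
Qed.

Lemma subm_chi (X : {set E}) : in_subm_poly D rho (chi R X) <-> Qprop D rho X.
Proof.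
split => h A hA; have := h A hA; by rewrite xsum_chi ler_nat.
Qed.

Local Notation r := (gen_ext_rank D rho).

Lemma claim3 (x : 'rV[R]_n) : in_indep_poly r x <-> conv (fun y => in_subm_poly D rho y /\ is01 y) x.
Proof.
split; apply: conv_mono => y.
  by case=> I -> /(r_indep hU) hI; split; [exact/subm_chi | by exists I].
by case=> hy [X e]; exists X => //; apply/(r_indep hU); apply/subm_chi; rewrite -e.
Qed.

Lemma claim1 (x : 'rV[R]_n) : in_base_poly [set: {set E}] r x <-> conv (fun y => in_base_poly D rho y /\ is01 y) x.
Proof.
have hT : [set: E] \in D by case: hU => [[]].
split.
  case=> h1 e; apply/claim2; split; first split.
  - by move=> A hA; rewrite -(r_D hU hA); apply: h1; rewrite inE.
  - by rewrite e (r_D hU hT).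
  - move=> a; apply/andP; split.
      have h := h1 _ (in_setT ([set: E] :\ a)).
      have hp := r_mono hU (subsetT ([set: E] :\ a)).
      have hp' : ((r ([set: E] :\ a))%:R <= (r [set: E])%:R :> R) by rewrite ler_nat.
      have := xsumT x a; lra.
    have h := h1 _ (in_setT [set a]); rewrite xsum1 in h.
    have hp := r_le1 hU a.
    have hp' : ((r [set a])%:R <= 1 :> R) by rewrite -[1]/(1%:R) ler_nat.
    lra.
move=> hc; split.
  move=> A _; apply: (conv_xsum_le _ hc) => y [[hy ey] [X eX]].
  rewrite eX xsum_chi ler_nat; move: A; apply/(r_Q hU); apply/subm_chi; by rewrite -eX.
rewrite (r_D hU hT); apply: (conv_xsum_eq _ hc) => y [[_ ey] _]; exact: ey.
Qed.

End Concrete.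

Unset Implicit Arguments.
Local Open Scope ring_scope.

Theorem theorem4p14 (R : realType) (n : nat) (D : {set {set 'I_n}})
    (rho : {set 'I_n} -> nat) :
  is_Umatroid D rho ->
  [/\ (forall x : 'rV[R]_n,
         in_base_poly [set: {set 'I_n}] (gen_ext_rank D rho) x <->
         conv (fun y => in_base_poly D rho y /\ is01 y) x),
      (forall x : 'rV[R]_n,
         conv (fun y => in_base_poly D rho y /\ is01 y) x <->
         in_base_poly D rho x /\ in_cube x),
      (forall x : 'rV[R]_n,
         in_indep_poly (gen_ext_rank D rho) x <->
         conv (fun y => in_subm_poly D rho y /\ is01 y) x) &
      (forall x : 'rV[R]_n,
         conv (fun y => in_subm_poly D rho y /\ is01 y) x <->
         in_subm_poly D rho x /\ in_cube x)].
Proof.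
move=> hU; split => x.
- exact: claim1.
- exact: claim2.
- exact: claim3.
- exact: claim4.
Qed.
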